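(* For every $\beta \in \{\mathbf{G}, \mathbf{Psd}, \mathbf{Sd}\}$, $[\tau(\mathbf{SemWb})\mathbf{Txt}\beta\mathbf{Bc}] = [\tau(\mathbf{SemConv})\mathbf{Txt}\beta\mathbf{Bc}]$.
   Context: Fix an acceptable numbering $(\varphi_e)$ of partial computable functions, $W_e=\mathrm{dom}(\varphi_e)$. A text is a total function $T:\mathbb N\to\mathbb N\cup\{\#\}$, $\mathrm{content}(T)=\mathrm{range}(T)\setminus\{\#\}$, $T[n]=(T(0),\dots,T(n-1))$; $\mathbf{Txt}$ is the set of all texts, $\mathbf{Txt}(L)$ those with content $L$. Learners are partial computable functions; $\mathbf G(h,T)(i)=h(T[i])$, $\mathbf{Psd}(h,T)(i)=h(\mathrm{content}(T[i]),i)$, $\mathbf{Sd}(h,T)(i)=h(\mathrm{content}(T[i]))$. For total $p:\mathbb N\to\mathbb N$ and text $T$: $\mathbf{Bc}(p,T)$ iff $\exists n_0\,\forall n\ge n_0: W_{p(n)}=\mathrm{content}(T)$; $\mathbf{SemWb}(p,T)$ iff for all $n,m$: if there is $k$ with $n\le k\le m$ and $W_{p(n)}\ne W_{p(k)}$, then $(\mathrm{content}(T[m])\cap W_{p(m)})\setminus W_{p(n)}\ne\emptyset$; $\mathbf{SemConv}(p,T)$ iff for all $n<m$ with $\mathrm{content}(T[m])\subseteq W_{p(n)}$ we have $W_{p(n)}=W_{p(m)}$. A learner $h$ $\tau(\alpha)\mathbf{Txt}\beta\mathbf{Bc}$-learns $L$ iff for every $T\in\mathbf{Txt}$, $\beta(h,T)$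 is total and $\alpha(\beta(h,T),T)$ holds, and for every $T\in\mathbf{Txt}(L)$, $\mathbf{Bc}(\beta(h,T),T)$ holds. $[\cdot]$ is the set of classes learnable by a single learner under the criterion. *)

(* Defs.v *)
From Stdlib Require Import Arith List.
Import ListNotations.

Definition pair (x y : nat) : nat := (x + y) * (x + y + 1) / 2 + y.

Fixpoint unpair (z : nat) : nat * nat :=
  match z with
  | 0 => (0, 0)
  | S z' => let (x, y) := unpair z' in
            match x with
            | S x' => (x', S y)
            | 0 => (S y, 0)
            end
  end.

Inductive code : Type :=
| CZero | CSucc | CId | CFst | CSnd
| CPair (f g : code)
| CComp (f g : code)
| CPrim (f g : code)        (* h <a,0> = f a ; h <a,n+1> = g <<a,n>, h <a,n>> *)
| CMu (f : code).           (* x |-> least n with f <x,n> = 0 (earlier values defined) *)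

Fixpoint eval (k : nat) (c : code) (x : nat) : option nat :=
  match k with
  | 0 => None
  | S k =>
    match c with
    | CZero => Some 0
    | CSucc => Some (S x)
    | CId => Some x
    | CFst => Some (fst (unpair x))
    | CSnd => Some (snd (unpair x))
    | CPair f g =>
        match eval k f x, eval k g x with
        | Some a, Some b => Some (pair a b)
        | _, _ => None
        end
    | CComp f g =>
        match eval k g x with
        | Some a => eval k f a
        | None => None
        end
    | CPrim f g =>
        let a := fst (unpair x) in
        (fix rec (n : nat) : option nat :=
           match n with
           | 0 => eval k f a
           | S n' => match rec n' with
                     | Some r => eval k g (pair (pair a n') r)
                     | None => None
                     end
           end) (snd (unpair x))
    | CMu f =>
        (fix srch (j n : nat) : option nat :=
           match j with
           | 0 => None
           | S j' => match eval k f (pair x n) with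
                     | Some 0 => Some n
                     | Some _ => srch j' (S n)
                     | None => None
                     end
           end) k 0
    end
  end.

(* decoding of natural numbers into codes (surjective, computable) *)
Fixpoint dec (fuel n : nat) : code :=
  match fuel with
  | 0 => CZero
  | S fu =>
    let p := n / 9 in
    let i := fst (unpair p) in
    let j := snd (unpair p) in
    match n mod 9 with
    | 0 => CZero | 1 => CSucc | 2 => CId | 3 => CFst | 4 => CSnd
    | 5 => CPair (dec fu i) (dec fu j)
    | 6 => CComp (dec fu i) (dec fu j)
    | 7 => CPrim (dec fu i) (dec fu j)
    | _ => CMu (dec fu p)
    end
  end.

Definition decode (n : nat) : code := dec (S n) n.

Definition psi (e x y : nat) : Prop := exists k, eval k (decode e) x = Some y.

Definition acceptable (phi : nat -> nat -> nat -> Prop) : Prop :=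
  exists f g : nat -> nat,
    (exists cf, forall x, psi cf x (f x)) /\
    (exists cg, forall x, psi cg x (g x)) /\
    (forall e x y, phi e x y <-> psi (f e) x y) /\
    (forall e x y, psi e x y <-> phi (g e) x y).

Definition W (phi : nat -> nat -> nat -> Prop) (e x : nat) : Prop :=
  exists y, phi e x y.

Definition set_eq (A B : nat -> Prop) : Prop := forall x, A x <-> B x.

(* A text: None stands for the pause symbol # *)
Definition text := nat -> option nat.

Definition content (T : text) (x : nat) : Prop := exists n, T n = Some x.

(* T[n] = (T 0, ..., T (n-1)) *)
Definition prefix (T : text) (n : nat) : list (option nat) := map T (seq 0 n).

Definition content_prefix (T : text) (m : nat) (x : nat) : Prop :=
  exists i, i < m /\ T i = Some x.

Definition enc_item (o : option nat) : nat :=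
  match o with None => 0 | Some n => S n end.

Fixpoint enc_list (s : list nat) : nat :=
  match s with [] => 0 | a :: s' => S (pair a (enc_list s')) end.

Definition enc_seq (s : list (option nat)) : nat := enc_list (map enc_item s).

Fixpoint undup_nat (s : list nat) : list nat :=
  match s with
  | [] => []
  | a :: s' => if existsb (Nat.eqb a) s' then undup_nat s' else a :: undup_nat s'
  end.

Definition enc_set (s : list nat) : nat :=
  fold_right (fun x acc => 2 ^ x + acc) 0 (undup_nat s).

Definition content_list (T : text) (i : nat) : list nat :=
  flat_map (fun o => match o with None => [] | Some n => [n] end) (prefix T i).

Inductive interaction := G | Psd | Sd.

(* run b h T i y  <->  beta(h,T)(i) = y, where the learner h is the partial
   computable function psi_h *)
Definition run (b : interaction) (h : nat) (T : text) (i y : nat) : Prop :=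
  match b with
  | G => psi h (enc_seq (prefix T i)) y
  | Psd => psi h (pair (enc_set (content_list T i)) i) y
  | Sd => psi h (enc_set (content_list T i)) y
  end.

Definition criterion := (nat -> nat) -> text -> Prop.

Definition Bc (phi : nat -> nat -> nat -> Prop) : criterion := fun p T =>
  exists n0, forall n, n0 <= n -> set_eq (W phi (p n)) (content T).

Definition SemWb (phi : nat -> nat -> nat -> Prop) : criterion := fun p T =>
  forall n m,
    (exists k, n <= k /\ k <= m /\ ~ set_eq (W phi (p n)) (W phi (p k))) ->
    exists x, content_prefix T m x /\ W phi (p m) x /\ ~ W phi (p n) x.

Definition SemConv (phi : nat -> nat -> nat -> Prop) : criterion := fun p T =>
  forall n m, n < m ->
    (forall x, content_prefix T m x -> W phi (p n) x) ->
    set_eq (W phi (p n)) (W phi (p m)).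

(* h tau(alpha)Txt beta Bc-learns every language of the class C *)
Definition learns_class (phi : nat -> nat -> nat -> Prop) (alpha : criterion)
    (b : interaction) (h : nat) (C : (nat -> Prop) -> Prop) : Prop :=
  (forall T : text, exists p : nat -> nat,
       (forall i, run b h T i (p i)) /\ alpha p T) /\
  (forall L, C L -> forall T : text, set_eq (content T) L ->
       exists p : nat -> nat, (forall i, run b h T i (p i)) /\ Bc phi p T).

Definition learnable (phi : nat -> nat -> nat -> Prop) (alpha : criterion)
    (b : interaction) (C : (nat -> Prop) -> Prop) : Prop :=
  exists h : nat, learns_class phi alpha b h C.

(* Main.v *)
From Stdlib Require Import Arith Lia List Bool Classical ClassicalEpsilon.
Require Import Defs.
Import ListNotations.

Lemma tri_succ s : (S s) * (S s + 1) / 2 = s * (s + 1) / 2 + S s.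
Proof.
  replace (S s * (S s + 1)) with (s * (s+1) + S s * 2) by nia.
  rewrite Nat.div_add; lia.
Qed.

Lemma pair_succ_y x y : pair x (S y) = S (pair (S x) y).
Proof. unfold pair. replace (x + S y) with (S x + y) by lia. lia. Qed.

Lemma pair_S0 y : pair (S y) 0 = S (pair 0 y).
Proof. unfold pair. rewrite !Nat.add_0_r, Nat.add_0_l.
  rewrite (tri_succ y). lia. Qed.

Lemma pair_ge_y x y : y <= pair x y.
Proof. unfold pair. lia. Qed.

Lemma pair_ge_x x y : x <= pair x y.
Proof. unfold pair.
  destruct (x + y) eqn:E. lia.
  rewrite tri_succ. lia. Qed.

Lemma pair_00 x y : pair x y = 0 -> x = 0 /\ y = 0.
Proof. intros H. pose proof (pair_ge_x x y). pose proof (pair_ge_y x y). lia. Qed.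

Lemma unpair_pair_aux n : forall x y, pair x y = n -> unpair n = (x, y).
Proof.
  induction n; intros x y H.
  - apply pair_00 in H. destruct H; subst. reflexivity.
  - destruct y as [|y'].
    + destruct x as [|x0].
      * unfold pair in H. rewrite Nat.add_0_r in H. replace (0 * (0+1)/2) with 0 in H by reflexivity. discriminate.
      * rewrite pair_S0 in H. injection H as H. apply IHn in H.
        simpl. rewrite H. reflexivity.
    + rewrite pair_succ_y in H. injection H as H. apply IHn in H.
      simpl. rewrite H. reflexivity.
Qed.

Lemma unpair_pair x y : unpair (pair x y) = (x, y).
Proof. apply unpair_pair_aux. reflexivity. Qed.

Lemma fst_unpair_pair x y : fst (unpair (pair x y)) = x.
Proof. rewrite unpair_pair. reflexivity. Qed.
Lemma snd_unpair_pair x y : snd (unpair (pair x y)) = y.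
Proof. rewrite unpair_pair. reflexivity. Qed.

Lemma pair_unpair z : pair (fst (unpair z)) (snd (unpair z)) = z.
Proof.
  induction z. reflexivity.
  simpl. destruct (unpair z) as [x y]. simpl in *.
  destruct x as [|x'].
  - simpl. rewrite pair_S0. lia.
  - simpl. rewrite pair_succ_y. lia.
Qed.

Lemma unpair_le1 z : fst (unpair z) <= z.
Proof. rewrite <- (pair_unpair z) at 2. apply pair_ge_x. Qed.
Lemma unpair_le2 z : snd (unpair z) <= z.
Proof. rewrite <- (pair_unpair z) at 2. apply pair_ge_y. Qed.

Lemma eval_mono k : forall c x y, eval k c x = Some y -> forall k', k <= k' -> eval k' c x = Some y.
Proof.
  induction k as [|k IH]; intros c x y H k' Hk. discriminate.
  destruct k' as [|k']. lia. assert (Hk2 : k <= k') by lia.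
  destruct c; simpl in H |- *; try exact H.
  - destruct (eval k c1 x) eqn:E1; try discriminate.
    destruct (eval k c2 x) eqn:E2; try discriminate.
    rewrite (IH _ _ _ E1 _ Hk2), (IH _ _ _ E2 _ Hk2). exact H.
  - destruct (eval k c2 x) eqn:E1; try discriminate.
    rewrite (IH _ _ _ E1 _ Hk2). eapply IH; eauto.
  - revert y H. generalize (snd (unpair x)) as n. induction n; intros y H.
    + eapply IH; eauto.
    + destruct (_ n) eqn:E in H; try discriminate.
      rewrite (IHn _ E). eapply IH; eauto.
  - revert H. generalize 0 as n0.
    assert (forall j j' n0, j <= j' ->
      (fix srch (j n : nat) {struct j} : option nat :=
         match j with
         | 0 => None
         | S j' => match eval k c (pair x n) with
                   | Some 0 => Some n
                   | Some (S _) => srch j' (S n)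
                   | None => None
                   end
         end) j n0 = Some y ->
      (fix srch (j n : nat) {struct j} : option nat :=
         match j with
         | 0 => None
         | S j' => match eval k' c (pair x n) with
                   | Some 0 => Some n
                   | Some (S _) => srch j' (S n)
                   | None => None
                   end
         end) j' n0 = Some y) as Hs.
    { induction j; intros j' n0 Hj H. discriminate.
      destruct j' as [|j']. lia.
      destruct (eval k c (pair x n0)) as [v|] eqn:E; try discriminate.
      rewrite (IH _ _ _ E _ Hk2).
      destruct v. exact H. eapply IHj; [lia|exact H]. }
    intros n0 H. eapply Hs; [|exact H]. lia.
Qed.

Lemma eval_det k k' c x y y' : eval k c x = Some y -> eval k' c x = Some y' -> y = y'.
Proof.
  intros H1 H2.
  pose proof (eval_mono _ _ _ _ H1 (max k k') ltac:(lia)).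
  pose proof (eval_mono _ _ _ _ H2 (max k k') ltac:(lia)). congruence.
Qed.

Definition ev (c : code) (x y : nat) : Prop := exists k, eval k c x = Some y.

Lemma ev_det c x y y' : ev c x y -> ev c x y' -> y = y'.
Proof. intros [k H] [k' H']. eapply eval_det; eauto. Qed.

Lemma psi_det e x y y' : psi e x y -> psi e x y' -> y = y'.
Proof. intros [k H] [k' H']. eapply eval_det; eauto. Qed.

Lemma ev_of k c x y : eval k c x = Some y -> ev c x y.
Proof. intros; exists k; auto. Qed.

Lemma ev_zero x : ev CZero x 0. Proof. exists 1; reflexivity. Qed.
Lemma ev_succ x : ev CSucc x (S x). Proof. exists 1; reflexivity. Qed.
Lemma ev_id x : ev CId x x. Proof. exists 1; reflexivity. Qed.
Lemma ev_fst x : ev CFst x (fst (unpair x)). Proof. exists 1; reflexivity. Qed.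
Lemma ev_snd x : ev CSnd x (snd (unpair x)). Proof. exists 1; reflexivity. Qed.
Lemma ev_fst' a b : ev CFst (pair a b) a.
Proof. rewrite <- (fst_unpair_pair a b) at 2. apply ev_fst. Qed.
Lemma ev_snd' a b : ev CSnd (pair a b) b.
Proof. rewrite <- (snd_unpair_pair a b) at 2. apply ev_snd. Qed.

Lemma ev_pair f g x a b : ev f x a -> ev g x b -> ev (CPair f g) x (pair a b).
Proof.
  intros [k1 H1] [k2 H2]. exists (S (max k1 k2)). simpl.
  rewrite (eval_mono _ _ _ _ H1 (max k1 k2) ltac:(lia)).
  rewrite (eval_mono _ _ _ _ H2 (max k1 k2) ltac:(lia)). reflexivity.
Qed.

Lemma ev_pair_inv f g x y : ev (CPair f g) x y -> exists a b, ev f x a /\ ev g x b /\ y = pair a b.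
Proof.
  intros [k H]. destruct k. discriminate. simpl in H.
  destruct (eval k f x) eqn:E1; try discriminate.
  destruct (eval k g x) eqn:E2; try discriminate.
  injection H as <-. exists n, n0. repeat split; eauto using ev_of.
Qed.

Lemma ev_comp f g x a b : ev g x a -> ev f a b -> ev (CComp f g) x b.
Proof.
  intros [k1 H1] [k2 H2]. exists (S (max k1 k2)). simpl.
  rewrite (eval_mono _ _ _ _ H1 (max k1 k2) ltac:(lia)).
  rewrite (eval_mono _ _ _ _ H2 (max k1 k2) ltac:(lia)). reflexivity.
Qed.

Lemma ev_comp_inv f g x y : ev (CComp f g) x y -> exists a, ev g x a /\ ev f a y.
Proof.
  intros [k H]. destruct k. discriminate. simpl in H.
  destruct (eval k g x) eqn:E1; try discriminate.
  exists n. split; eauto using ev_of.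
Qed.

Inductive PR (f g : code) (a : nat) : nat -> nat -> Prop :=
| PR0 r : ev f a r -> PR f g a 0 r
| PRS n r r' : PR f g a n r -> ev g (pair (pair a n) r) r' -> PR f g a (S n) r'.

Lemma ev_prim f g a n y : ev (CPrim f g) (pair a n) y <-> PR f g a n y.
Proof.
  split.
  - intros [k H]. destruct k. discriminate. simpl in H.
    rewrite fst_unpair_pair, snd_unpair_pair in H.
    revert y H. induction n; intros y H.
    + constructor. eauto using ev_of.
    + destruct (_ n) eqn:E in H; try discriminate.
      econstructor; eauto using ev_of.
  - intros H. assert (exists k, forall k', k <= k' ->
      (fix rec (n0 : nat) : option nat :=
           match n0 with
           | 0 => eval k' f a
           | S n' => match rec n' with
                     | Some r => eval k' g (pair (pair a n') r)
                     | None => None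
                     end
           end) n = Some y) as [k Hk].
    { induction H as [r [k Hk]| n r r' _ [k1 IH] [k2 H2]].
      - exists k. intros k' Hk'. eapply eval_mono; eauto.
      - exists (max k1 k2). intros k' Hk'. rewrite (IH k' ltac:(lia)).
        eapply eval_mono; eauto. lia. }
    exists (S k). simpl. rewrite fst_unpair_pair, snd_unpair_pair. apply Hk. lia.
Qed.

Definition dom (c : code) (x : nat) : Prop := exists y, ev c x y.

Lemma div9_lt n : n <> 0 -> n / 9 < n.
Proof. intros; apply Nat.div_lt; lia. Qed.

Lemma dec_stable fu : forall fu' n, n < fu -> n < fu' -> dec fu n = dec fu' n.
Proof.
  induction fu as [|fu IH]; intros fu' n H1 H2. lia.
  destruct fu' as [|fu']. lia.
  destruct (Nat.eq_dec n 0) as [->|Hn]. reflexivity.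
  pose proof (div9_lt n Hn).
  pose proof (unpair_le1 (n/9)). pose proof (unpair_le2 (n/9)).
  cbn [dec].
  destruct (n mod 9) as [|[|[|[|[|[|[|[|]]]]]]]]; try reflexivity;
   f_equal; apply IH; lia.
Qed.

Lemma decode_dec fu n : n < fu -> dec fu n = decode n.
Proof. intros; unfold decode; apply dec_stable; lia. Qed.

Lemma mod9 p r : r < 9 -> (9 * p + r) mod 9 = r.
Proof. intros. rewrite Nat.add_comm, Nat.mul_comm, Nat.Div0.mod_add. apply Nat.mod_small; auto. Qed.
Lemma div9 p r : r < 9 -> (9 * p + r) / 9 = p.
Proof. intros. rewrite Nat.add_comm, Nat.mul_comm, Nat.div_add by lia. rewrite Nat.div_small; lia. Qed.

Ltac dec_tac a b r :=
  unfold decode at 1; cbn [dec];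
  rewrite (mod9 _ r ltac:(lia)), (div9 _ r ltac:(lia)), fst_unpair_pair, snd_unpair_pair;
  cbn iota beta;
  pose proof (pair_ge_x a b); pose proof (pair_ge_y a b);
  rewrite !decode_dec by lia.

Lemma decode_P a b : decode (9 * pair a b + 5) = CPair (decode a) (decode b).
Proof. dec_tac a b 5. reflexivity. Qed.
Lemma decode_C a b : decode (9 * pair a b + 6) = CComp (decode a) (decode b).
Proof. dec_tac a b 6. reflexivity. Qed.
Lemma decode_R a b : decode (9 * pair a b + 7) = CPrim (decode a) (decode b).
Proof. dec_tac a b 7. reflexivity. Qed.
Lemma decode_0 : decode 0 = CZero. reflexivity. Qed.
Lemma decode_1 : decode 1 = CSucc. reflexivity. Qed.
Lemma decode_2 : decode 2 = CId. reflexivity. Qed.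
Lemma decode_3 : decode 3 = CFst. reflexivity. Qed.
Lemma decode_4 : decode 4 = CSnd. reflexivity. Qed.

Fixpoint konst (n : nat) : code := match n with 0 => CZero | S m => CComp CSucc (konst m) end.
Lemma ev_konst n x : ev (konst n) x n.
Proof. induction n. apply ev_zero. simpl. eapply ev_comp. apply IHn. apply ev_succ. Qed.

Fixpoint primf (F : nat -> nat) (G : nat -> nat) (a n : nat) : nat :=
  match n with 0 => F a | S n' => G (pair (pair a n') (primf F G a n')) end.

Lemma ev_primf f g F Gf a n : (forall z, ev f z (F z)) -> (forall z, ev g z (Gf z)) ->
  ev (CPrim f g) (pair a n) (primf F Gf a n).
Proof.
  intros Hf Hg. apply ev_prim. induction n; simpl; econstructor; eauto.
Qed.

Definition ITER (g : code) : code := CPrim CId (CComp g CSnd).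
Lemma ev_iter g G a n : (forall z, ev g z (G z)) -> ev (ITER g) (pair a n) (Nat.iter n G a).
Proof.
  intros Hg. apply ev_prim. induction n; simpl; econstructor; eauto. apply ev_id.
  eapply ev_comp. apply ev_snd'. apply Hg.
Qed.

Definition PRED : code := CComp (CPrim CZero (CComp CSnd CFst)) (CPair CZero CId).
Lemma ev_pred x : ev PRED x (pred x).
Proof.
  eapply ev_comp. eapply ev_pair. apply ev_zero. apply ev_id.
  replace (pred x) with (primf (fun _ => 0) (fun z => snd (unpair (fst (unpair z)))) 0 x).
  apply ev_primf. intros; apply ev_zero. intros z. eapply ev_comp. apply ev_fst. apply ev_snd.
  destruct x; simpl. reflexivity. rewrite !fst_unpair_pair, !snd_unpair_pair. reflexivity.
Qed.

Ltac evs0 := match goal with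
 | |- ev (CComp _ _) _ _ => eapply ev_comp
 | |- ev (CPair _ _) _ _ => eapply ev_pair
 | |- ev CFst (pair _ _) _ => apply ev_fst'
 | |- ev CSnd (pair _ _) _ => apply ev_snd'
 | |- ev CFst _ _ => apply ev_fst
 | |- ev CSnd _ _ => apply ev_snd
 | |- ev CId _ _ => apply ev_id
 | |- ev CZero _ _ => apply ev_zero
 | |- ev CSucc _ _ => apply ev_succ
 | |- ev (konst _) _ _ => apply ev_konst
 | |- ev PRED _ _ => apply ev_pred
 end.

Definition ADD : code := ITER CSucc.
Lemma ev_add u v : ev ADD (pair u v) (u + v).
Proof.
  replace (u + v) with (Nat.iter v S u).
  apply ev_iter. apply ev_succ.
  induction v; simpl; lia.
Qed.

Definition SUB : code := ITER PRED.
Lemma ev_sub u v : ev SUB (pair u v) (u - v).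
Proof.
  replace (u - v) with (Nat.iter v pred u).
  apply ev_iter. apply ev_pred.
  induction v; simpl. lia. rewrite IHv. lia.
Qed.

Definition isz (n : nat) : nat := match n with 0 => 1 | _ => 0 end.
Definition ISZ : code := CComp (CPrim (konst 1) CZero) (CPair CZero CId).
Lemma ev_isz x : ev ISZ x (isz x).
Proof.
  eapply ev_comp. eapply ev_pair. apply ev_zero. apply ev_id.
  replace (isz x) with (primf (fun _ => 1) (fun z => 0) 0 x).
  apply ev_primf. intros; apply ev_konst. intros z. apply ev_zero.
  destruct x; reflexivity.
Qed.

Definition MUL : code :=
  CComp CSnd (CComp (ITER (CPair CFst ADD)) (CPair (CPair CFst CZero) CSnd)).
Lemma ev_mul u v : ev MUL (pair u v) (u * v).
Proof.
  eapply ev_comp. eapply ev_comp. eapply ev_pair. eapply ev_pair. apply ev_fst'. apply ev_zero. apply ev_snd'.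
  apply (ev_iter _ (fun z => pair (fst (unpair z)) (fst (unpair z) + snd (unpair z)))).
  { intros z. rewrite <- (pair_unpair z) at 1 2. apply ev_pair. apply ev_fst. apply ev_add. }
  assert (forall v, Nat.iter v (fun z => pair (fst (unpair z)) (fst (unpair z) + snd (unpair z))) (pair u 0) = pair u (u * v)) as ->.
  { induction v0; simpl. f_equal; lia. rewrite IHv0, fst_unpair_pair, snd_unpair_pair. f_equal. lia. }
  apply ev_snd'.
Qed.

Definition eqn (u v : nat) : nat := if Nat.eqb u v then 1 else 0.
Definition EQB : code := CComp ISZ (CComp ADD (CPair SUB (CComp SUB (CPair CSnd CFst)))).
Lemma ev_eqb u v : ev EQB (pair u v) (eqn u v).
Proof.
  eapply ev_comp. eapply ev_comp. eapply ev_pair. apply ev_sub.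
  eapply ev_comp. eapply ev_pair. apply ev_snd'. apply ev_fst'. apply ev_sub.
  apply ev_add.
  replace (eqn u v) with (isz (u - v + (v - u))). apply ev_isz.
  unfold eqn. destruct (Nat.eqb_spec u v). subst. rewrite Nat.sub_diag. reflexivity.
  destruct (u - v + (v - u)) eqn:E. lia. reflexivity.
Qed.

(* selection: b in {0,1} *)
Definition sel (b u v : nat) : nat := b * u + isz b * v.
Definition SEL (cb cu cv : code) : code :=
  CComp ADD (CPair (CComp MUL (CPair cb cu)) (CComp MUL (CPair (CComp ISZ cb) cv))).
Lemma ev_sel cb cu cv x b u v : ev cb x b -> ev cu x u -> ev cv x v -> ev (SEL cb cu cv) x (sel b u v).
Proof.
  intros Hb Hu Hv. eapply ev_comp. eapply ev_pair.
  eapply ev_comp. eapply ev_pair; eauto. apply ev_mul.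
  eapply ev_comp. eapply ev_pair. eapply ev_comp. apply Hb. apply ev_isz. apply Hv. apply ev_mul.
  apply ev_add.
Qed.
Lemma sel1 u v : sel 1 u v = u. Proof. unfold sel; simpl; lia. Qed.
Lemma sel0 u v : sel 0 u v = v. Proof. unfold sel; simpl; lia. Qed.

Definition hd (z : nat) : nat := fst (unpair (pred z)).
Definition tl (z : nat) : nat := snd (unpair (pred z)).
Definition HD : code := CComp CFst PRED.
Definition TL : code := CComp CSnd PRED.
Lemma ev_hd z : ev HD z (hd z). Proof. eapply ev_comp. apply ev_pred. apply ev_fst. Qed.
Lemma ev_tl z : ev TL z (tl z). Proof. eapply ev_comp. apply ev_pred. apply ev_snd. Qed.
Lemma hd_cons a l : hd (enc_list (a :: l)) = a.
Proof. unfold hd. simpl. apply fst_unpair_pair. Qed.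
Lemma tl_cons a l : tl (enc_list (a :: l)) = enc_list l.
Proof. unfold tl. simpl. apply snd_unpair_pair. Qed.
Lemma hd0 : hd 0 = 0. reflexivity. Qed.
Lemma tl0 : tl 0 = 0. reflexivity. Qed.

Definition lnth (n l : nat) : nat := hd (Nat.iter n tl l).
Definition NTH : code := CComp HD (CComp (ITER TL) (CPair CSnd CFst)).
Lemma ev_nth n l : ev NTH (pair n l) (lnth n l).
Proof.
  eapply ev_comp. eapply ev_comp. eapply ev_pair. apply ev_snd'. apply ev_fst'.
  apply ev_iter. apply ev_tl. apply ev_hd.
Qed.

Lemma iter_tl0 n : Nat.iter n tl 0 = 0.
Proof. induction n; simpl; auto. rewrite IHn; reflexivity. Qed.

Lemma iter_S_r {A} n (f : A -> A) x : Nat.iter (S n) f x = Nat.iter n f (f x).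
Proof. induction n; simpl; auto. simpl in IHn. rewrite IHn. reflexivity. Qed.

Lemma lnth_enc s n : lnth n (enc_list s) = nth n s 0.
Proof.
  revert n; induction s; intros n.
  - unfold lnth. rewrite iter_tl0. destruct n; reflexivity.
  - destruct n. unfold lnth; simpl. apply hd_cons.
    unfold lnth. rewrite iter_S_r, tl_cons. apply IHs.
Qed.

Lemma len_le_enc s : length s <= enc_list s.
Proof. induction s; simpl; auto. pose proof (pair_ge_y a (enc_list s)). lia. Qed.

Definition b2 (b : bool) : nat := if b then 1 else 0.

Definition LOOP (st : code) : code :=
  CComp CSnd (CComp (ITER (CPair (CComp TL CFst) (CComp st (CPair (CComp HD CFst) CSnd)))) (CPair CId CFst)).
Definition loopstep (stf : nat -> nat -> nat) (z : nat) : nat :=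
  pair (tl (fst (unpair z))) (stf (hd (fst (unpair z))) (snd (unpair z))).
Lemma ev_loop st stf l acc : (forall e a, ev st (pair e a) (stf e a)) ->
  ev (LOOP st) (pair l acc) (snd (unpair (Nat.iter l (loopstep stf) (pair l acc)))).
Proof.
  intros Hs. eapply ev_comp. eapply ev_comp. eapply ev_pair. apply ev_id. apply ev_fst'.
  apply ev_iter.
  { intros z. eapply ev_pair. eapply ev_comp. apply ev_fst. apply ev_tl.
    eapply ev_comp. eapply ev_pair. eapply ev_comp. apply ev_fst. apply ev_hd. apply ev_snd.
    apply Hs. }
  apply ev_snd.
Qed.

Lemma loop_spec stf : (forall a, stf 0 a = a) -> forall s acc n, length s <= n ->
  Nat.iter n (loopstep stf) (pair (enc_list s) acc) = pair 0 (fold_left (fun a e => stf e a) s acc).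
Proof.
  intros H0. induction s; intros acc n Hn.
  - simpl. induction n. reflexivity. simpl. rewrite IHn by (simpl; lia).
    unfold loopstep. rewrite fst_unpair_pair, snd_unpair_pair. rewrite H0. reflexivity.
  - destruct n. simpl in Hn; lia. rewrite iter_S_r. unfold loopstep at 2.
    rewrite fst_unpair_pair, snd_unpair_pair, hd_cons, tl_cons. apply IHs. simpl in Hn; lia.
Qed.

Lemma loop_enc st stf s acc : (forall e a, ev st (pair e a) (stf e a)) -> (forall a, stf 0 a = a) ->
  ev (LOOP st) (pair (enc_list s) acc) (fold_left (fun a e => stf e a) s acc).
Proof.
  intros Hs H0. pose proof (ev_loop st stf (enc_list s) acc Hs).
  rewrite loop_spec in H; auto. rewrite snd_unpair_pair in H. exact H.
  apply len_le_enc.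
Qed.

Ltac evs := repeat evs0.

Fixpoint cntr (e l n : nat) : nat :=
  match n with 0 => 0 | S n' => cntr e l n' + eqn (lnth n' l) e end.

Definition CNTSTEP : code :=
  CComp ADD (CPair CSnd (CComp EQB (CPair (CComp NTH (CPair (CComp CSnd CFst) (CComp CSnd (CComp CFst CFst))))
                                            (CComp CFst (CComp CFst CFst))))).
Definition COUNT : code := CComp (CPrim CZero CNTSTEP) (CPair CId CSnd).

Lemma ev_count e l : ev COUNT (pair e l) (cntr e l l).
Proof.
  eapply ev_comp. evs.
  try rewrite snd_unpair_pair.
  replace (cntr e l l) with (primf (fun _ => 0)
     (fun z => snd (unpair z) + eqn (lnth (snd (unpair (fst (unpair z)))) (snd (unpair (fst (unpair (fst (unpair z)))))))
                          (fst (unpair (fst (unpair (fst (unpair z))))))) (pair e l) l).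
  - apply ev_primf. intros; apply ev_zero.
    intros z. unfold CNTSTEP. evs. apply ev_nth. apply ev_eqb. apply ev_add.
  - generalize l at 2 4. intros n. induction n; simpl; auto.
    rewrite IHn, !fst_unpair_pair, !snd_unpair_pair. reflexivity.
Qed.

Lemma cntr_pos e l n : 0 < cntr e l n <-> exists i, i < n /\ lnth i l = e.
Proof.
  induction n; simpl. split. lia. intros (i & H & _); lia.
  unfold eqn. destruct (Nat.eqb_spec (lnth n l) e).
  - split. intros _. exists n; split; auto. intros _; lia.
  - rewrite Nat.add_0_r, IHn. split; intros (i & Hi & Hl). exists i; split; auto.
    exists i. split; auto. assert (i <> n) by congruence. lia.
Qed.

Lemma cnt_in e s : e <> 0 -> (0 < cntr e (enc_list s) (enc_list s) <-> In e s).
Proof.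
  intros He. rewrite cntr_pos. split.
  - intros (i & Hi & Hl). rewrite lnth_enc in Hl.
    destruct (Nat.lt_ge_cases i (length s)).
    + rewrite <- Hl. apply nth_In; auto.
    + rewrite nth_overflow in Hl; auto. congruence.
  - intros H. destruct (In_nth s e 0 H) as (i & Hi & Hn). exists i. split.
    pose proof (len_le_enc s). lia. rewrite lnth_enc; auto.
Qed.

Definition NZ : code := CComp ISZ ISZ.
Lemma ev_nz x : ev NZ x (isz (isz x)). Proof. eapply ev_comp; apply ev_isz. Qed.
Lemma isz_isz x : isz (isz x) = Nat.b2n (negb (x =? 0)). Proof. destruct x; reflexivity. Qed.

Definition stnew (e a : nat) : nat := sel (isz (isz e) * isz (cntr e a a)) (S (pair e a)) a.
Definition STNEW : code :=
  SEL (CComp MUL (CPair (CComp NZ CFst) (CComp ISZ COUNT))) CSucc CSnd.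
Lemma ev_stnew e a : ev STNEW (pair e a) (stnew e a).
Proof.
  apply ev_sel. evs. apply ev_nz. apply ev_count. apply ev_isz. apply ev_mul.
  apply ev_succ. apply ev_snd'.
Qed.

Definition strev (e a : nat) : nat := sel (isz (isz e)) (S (pair e a)) a.
Definition STREV : code := SEL (CComp NZ CFst) CSucc CSnd.
Lemma ev_strev e a : ev STREV (pair e a) (strev e a).
Proof. apply ev_sel. evs. apply ev_nz. apply ev_succ. apply ev_snd'. Qed.

Definition newf (a : list nat) (e : nat) : list nat :=
  if negb (e =? 0) && negb (existsb (Nat.eqb e) a) then e :: a else a.
Definition revf (a : list nat) (e : nat) : list nat :=
  if negb (e =? 0) then e :: a else a.

Lemma existsb_in e a : existsb (Nat.eqb e) a = true <-> In e a.
Proof. rewrite existsb_exists. split. intros (x & H & E). apply Nat.eqb_eq in E. subst; auto.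
  intros H. exists e. split; auto. apply Nat.eqb_refl. Qed.

Lemma stnew_enc e a : stnew e (enc_list a) = enc_list (newf a e).
Proof.
  unfold stnew, newf. destruct (Nat.eqb_spec e 0).
  - subst. simpl. apply sel0.
  - simpl. destruct (existsb (Nat.eqb e) a) eqn:E.
    + apply existsb_in in E. apply (cnt_in e a n) in E.
      destruct (cntr e (enc_list a) (enc_list a)). lia. rewrite isz_isz.
      replace (negb (e =? 0)) with true. simpl. apply sel0.
      destruct e; [lia|reflexivity].
    + assert (~ In e a) as Hn. { intros H. apply existsb_in in H. congruence. }
      destruct (cntr e (enc_list a) (enc_list a)) eqn:Ec.
      * rewrite isz_isz. replace (negb (e =? 0)) with true. simpl. apply sel1.
        destruct e; [lia|reflexivity].
      * exfalso. apply Hn. apply (cnt_in e a n). lia.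
Qed.

Lemma strev_enc e a : strev e (enc_list a) = enc_list (revf a e).
Proof.
  unfold strev, revf. destruct e. apply sel0. apply sel1.
Qed.

Lemma fold_enc (stf : nat -> nat -> nat) (lf : list nat -> nat -> list nat) s a :
  (forall e a, stf e (enc_list a) = enc_list (lf a e)) ->
  fold_left (fun a e => stf e a) s (enc_list a) = enc_list (fold_left lf s a).
Proof.
  intros H. revert a; induction s; intros; simpl; auto. rewrite H. apply IHs.
Qed.

Definition SG : code := CComp (LOOP STREV) (CPair (CComp (LOOP STNEW) (CPair CId CZero)) CZero).
Definition sgl (s : list nat) : list nat := fold_left revf (fold_left newf s []) [].

Lemma ev_sg s : ev SG (enc_list s) (enc_list (sgl s)).
Proof.
  eapply ev_comp. eapply ev_pair. eapply ev_comp. eapply ev_pair. apply ev_id. apply ev_zero.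
  change 0 with (enc_list []).
  apply loop_enc. apply ev_stnew. intros; apply sel0. apply ev_zero.
  rewrite (fold_enc stnew newf) by apply stnew_enc. change 0 with (enc_list []).
  unfold sgl. rewrite <- (fold_enc strev revf) by apply strev_enc.
  apply loop_enc. apply ev_strev. intros; apply sel0.
Qed.

Definition hostep (z : nat) : nat := pair (fst (unpair z) + snd (unpair z)) (isz (snd (unpair z))).
Definition HOSTEP : code := CPair ADD (CComp ISZ CSnd).
Definition HO : code := CComp (ITER HOSTEP) (CPair (CPair CZero CZero) CId).
Lemma ev_ho z : ev HO z (Nat.iter z hostep (pair 0 0)).
Proof.
  eapply ev_comp. evs. apply ev_iter. intros w. unfold HOSTEP. rewrite <- (pair_unpair w) at 1. unfold hostep.
  rewrite <- (pair_unpair w) at 2 3. rewrite !fst_unpair_pair, !snd_unpair_pair.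
  evs. apply ev_add. apply ev_isz.
Qed.

Lemma ho_spec z : Nat.iter z hostep (pair 0 0) = pair (Nat.div2 z) (Nat.b2n (Nat.odd z)).
Proof.
  induction z. reflexivity.
  simpl. rewrite IHz. unfold hostep. rewrite fst_unpair_pair, snd_unpair_pair.
  pose proof (Nat.div2_odd z) as H1. pose proof (Nat.div2_odd (S z)) as H2.
  rewrite Nat.odd_succ in *. rewrite <- Nat.negb_odd in *.
  destruct (Nat.odd z); simpl in *; f_equal; lia.
Qed.

Definition half (z : nat) : nat := fst (unpair (Nat.iter z hostep (pair 0 0))).
Definition HALF : code := CComp CFst HO.
Lemma half_spec z : half z = Nat.div2 z.
Proof. unfold half. rewrite ho_spec, fst_unpair_pair. reflexivity. Qed.

Definition BIT : code := CComp CSnd (CComp HO (ITER HALF)).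
Lemma ev_bit d y : ev BIT (pair d y) (Nat.b2n (Nat.testbit d y)).
Proof.
  eapply ev_comp. eapply ev_comp. apply ev_iter. intros z. eapply ev_comp. apply ev_ho. apply ev_fst.
  apply ev_ho. rewrite ho_spec.
  replace (Nat.testbit d y) with (Nat.odd (Nat.iter y half d)). apply ev_snd'.
  revert d. induction y; intros d. simpl. rewrite <- Nat.bit0_odd. reflexivity.
  rewrite iter_S_r, IHy, half_spec, Nat.testbit_div2. reflexivity.
Qed.

Fixpoint bl (d n : nat) : list nat :=
  match n with 0 => [] | S y => if Nat.testbit d y then S y :: bl d y else bl d y end.

Definition BSTEP : code :=
  SEL (CComp BIT CFst) (CComp CSucc (CPair (CComp CSucc (CComp CSnd CFst)) CSnd)) CSnd.
Definition BITS : code := CComp (CPrim CZero BSTEP) (CPair CId CId).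

Lemma ev_bits d : ev BITS d (enc_list (bl d d)).
Proof.
  eapply ev_comp. evs.
  replace (enc_list (bl d d)) with (primf (fun _ => 0)
    (fun z => sel (Nat.b2n (Nat.testbit (fst (unpair (fst (unpair z)))) (snd (unpair (fst (unpair z))))))
                  (S (pair (S (snd (unpair (fst (unpair z))))) (snd (unpair z)))) (snd (unpair z))) d d).
  - apply ev_primf. intros; apply ev_zero. intros z.
    apply ev_sel. eapply ev_comp. apply ev_fst. rewrite <- (pair_unpair (fst (unpair z))). 
    rewrite !fst_unpair_pair, !snd_unpair_pair. apply ev_bit.
    evs. apply ev_snd.
  - generalize d at 2 4. intros n. induction n; simpl; auto.
    rewrite IHn, !fst_unpair_pair, !snd_unpair_pair. destruct (Nat.testbit d n).
    apply sel1. apply sel0.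
Qed.

Lemma bl_in d n x : In x (bl d n) <-> exists y, x = S y /\ y < n /\ Nat.testbit d y = true.
Proof.
  induction n; simpl. split. tauto. intros (y & _ & H & _); lia.
  destruct (Nat.testbit d n) eqn:E; simpl; rewrite IHn; split.
  - intros [<-|(y & -> & H1 & H2)]. exists n; auto. exists y; split; auto.
  - intros (y & -> & H1 & H2). destruct (Nat.eq_dec y n). subst; auto. right. exists y. repeat split; auto; lia.
  - intros (y & -> & H1 & H2). exists y; auto.
  - intros (y & -> & H1 & H2). exists y. split; auto. split; auto.
    destruct (Nat.eq_dec y n). subst; congruence. lia.
Qed.

Lemma testbit_lt d y : Nat.testbit d y = true -> y < d.
Proof.
  intros H. destruct (Nat.lt_ge_cases y d); auto.
  destruct d. rewrite Nat.bits_0 in H; discriminate.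
  rewrite Nat.bits_above_log2 in H. discriminate.
  pose proof (Nat.log2_lt_lin (S d) ltac:(lia)). lia.
Qed.

Lemma bits_in d x : In (S x) (bl d d) <-> Nat.testbit d x = true.
Proof.
  rewrite bl_in. split. intros (y & E & _ & H). injection E as ->; auto.
  intros H. exists x. repeat split; auto. apply testbit_lt; auto.
Qed.

Lemma bits_nz d : ~ In 0 (bl d d).
Proof. rewrite bl_in. intros (y & E & _). discriminate. Qed.

Fixpoint popr (d n : nat) : nat := match n with 0 => 0 | S y => popr d y + Nat.b2n (Nat.testbit d y) end.
Definition PSTEP : code := CComp ADD (CPair CSnd (CComp BIT CFst)).
Definition POPC : code := CComp (CPrim CZero PSTEP) (CPair CId CId).
Lemma ev_popc d : ev POPC d (popr d d).
Proof.
  eapply ev_comp. evs.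
  replace (popr d d) with (primf (fun _ => 0)
    (fun z => snd (unpair z) + Nat.b2n (Nat.testbit (fst (unpair (fst (unpair z)))) (snd (unpair (fst (unpair z)))))) d d).
  - apply ev_primf. intros; apply ev_zero. intros z. unfold PSTEP.
    evs. rewrite <- (pair_unpair (fst (unpair z))) at 1. apply ev_bit. apply ev_add.
  - generalize d at 2 4. intros n. induction n; simpl; auto.
    rewrite IHn, !fst_unpair_pair, !snd_unpair_pair. reflexivity.
Qed.

Lemma decode_M p : decode (9 * p + 8) = CMu (decode p).
Proof.
  unfold decode at 1; cbn [dec].
  rewrite (mod9 _ 8 ltac:(lia)), (div9 _ 8 ltac:(lia)). cbn iota beta.
  rewrite decode_dec by lia. reflexivity.
Qed.

Fixpoint enc (c : code) : nat :=
  match c with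
  | CZero => 0 | CSucc => 1 | CId => 2 | CFst => 3 | CSnd => 4
  | CPair a b => 9 * pair (enc a) (enc b) + 5
  | CComp a b => 9 * pair (enc a) (enc b) + 6
  | CPrim a b => 9 * pair (enc a) (enc b) + 7
  | CMu a => 9 * enc a + 8
  end.

Lemma decode_enc c : decode (enc c) = c.
Proof.
  induction c; try reflexivity.
  change (decode (9 * pair (enc c1) (enc c2) + 5) = CPair c1 c2). rewrite decode_P; congruence.
  change (decode (9 * pair (enc c1) (enc c2) + 6) = CComp c1 c2). rewrite decode_C; congruence.
  change (decode (9 * pair (enc c1) (enc c2) + 7) = CPrim c1 c2). rewrite decode_R; congruence.
  change (decode (9 * enc c + 8) = CMu c). rewrite decode_M; congruence.
Qed.

Lemma psi_enc c x y : psi (enc c) x y <-> ev c x y.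
Proof. unfold psi, ev. rewrite decode_enc. tauto. Qed.

Inductive tcode : Type :=
| TZero | TSucc | TId | TFst | TSnd
| TPair (a b : tcode) | TComp (a b : tcode) | TPrim (a b : tcode) | H1 | H2.

Fixpoint inst (t : tcode) (c1 c2 : code) : code :=
  match t with
  | TZero => CZero | TSucc => CSucc | TId => CId | TFst => CFst | TSnd => CSnd
  | TPair a b => CPair (inst a c1 c2) (inst b c1 c2)
  | TComp a b => CComp (inst a c1 c2) (inst b c1 c2)
  | TPrim a b => CPrim (inst a c1 c2) (inst b c1 c2)
  | H1 => c1 | H2 => c2
  end.

Fixpoint lift (c : code) : tcode :=
  match c with
  | CZero => TZero | CSucc => TSucc | CId => TId | CFst => TFst | CSnd => TSnd
  | CPair a b => TPair (lift a) (lift b)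
  | CComp a b => TComp (lift a) (lift b)
  | CPrim a b => TPrim (lift a) (lift b)
  | CMu a => TZero
  end.

Fixpoint numT (t : tcode) (n1 n2 : nat) : nat :=
  match t with
  | TZero => 0 | TSucc => 1 | TId => 2 | TFst => 3 | TSnd => 4
  | TPair a b => 9 * pair (numT a n1 n2) (numT b n1 n2) + 5
  | TComp a b => 9 * pair (numT a n1 n2) (numT b n1 n2) + 6
  | TPrim a b => 9 * pair (numT a n1 n2) (numT b n1 n2) + 7
  | H1 => n1 | H2 => n2
  end.

Lemma numT_ok t n1 n2 : decode (numT t n1 n2) = inst t (decode n1) (decode n2).
Proof.
  induction t; try reflexivity.
  change (decode (9 * pair (numT t1 n1 n2) (numT t2 n1 n2) + 5) = CPair (inst t1 (decode n1) (decode n2)) (inst t2 (decode n1) (decode n2))). rewrite decode_P; congruence.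
  change (decode (9 * pair (numT t1 n1 n2) (numT t2 n1 n2) + 6) = CComp (inst t1 (decode n1) (decode n2)) (inst t2 (decode n1) (decode n2))). rewrite decode_C; congruence.
  change (decode (9 * pair (numT t1 n1 n2) (numT t2 n1 n2) + 7) = CPrim (inst t1 (decode n1) (decode n2)) (inst t2 (decode n1) (decode n2))). rewrite decode_R; congruence.
Qed.

Definition NUM (k : nat) : code := CComp ADD (CPair (CComp MUL (CPair (konst 9) CId)) (konst k)).
Lemma ev_num k z : ev (NUM k) z (9 * z + k).
Proof. unfold NUM. evs. apply ev_mul. apply ev_add. Qed.

Fixpoint mkT (t : tcode) : code :=
  match t with
  | TZero => konst 0 | TSucc => konst 1 | TId => konst 2 | TFst => konst 3 | TSnd => konst 4
  | TPair a b => CComp (NUM 5) (CPair (mkT a) (mkT b))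
  | TComp a b => CComp (NUM 6) (CPair (mkT a) (mkT b))
  | TPrim a b => CComp (NUM 7) (CPair (mkT a) (mkT b))
  | H1 => CFst | H2 => CSnd
  end.

Lemma ev_mkT t n1 n2 : ev (mkT t) (pair n1 n2) (numT t n1 n2).
Proof.
  induction t; cbn [mkT numT]; try apply ev_konst;
   try (eapply ev_comp; [eapply ev_pair; eauto | apply ev_num]).
  apply ev_fst'. apply ev_snd'.
Qed.

Definition kn (v : nat) : nat := Nat.iter v (fun r => 9 * pair 1 r + 6) 0.
Definition KN : code := CComp (ITER (CComp (NUM 6) (CPair (konst 1) CId))) (CPair CZero CId).
Lemma ev_kn v : ev KN v (kn v).
Proof.
  unfold KN. eapply ev_comp. evs. apply ev_iter. intros z. evs. apply ev_num.
Qed.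
Lemma kn_ok v : decode (kn v) = konst v.
Proof. induction v. reflexivity. change (decode (9 * pair 1 (kn v) + 6) = CComp CSucc (konst v)). rewrite decode_C, IHv. reflexivity. Qed.

Lemma dom_comp f g x : dom (CComp f g) x <-> exists a, ev g x a /\ dom f a.
Proof.
  split. intros [y H]. apply ev_comp_inv in H as (a & H1 & H2). exists a; split; auto. exists y; auto.
  intros (a & H1 & [y H2]). exists y. eapply ev_comp; eauto.
Qed.

Lemma dom_comp_fun f g G x : (forall z, ev g z (G z)) -> (dom (CComp f g) x <-> dom f (G x)).
Proof.
  intros HG. rewrite dom_comp. split. intros (a & H1 & H2). rewrite (ev_det _ _ _ _ (HG x) H1). auto.
  intros H. exists (G x). auto.
Qed.

Lemma dom_pair f g x : dom (CPair f g) x <-> dom f x /\ dom g x.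
Proof.
  split. intros [y H]. apply ev_pair_inv in H as (a & b & H1 & H2 & _). split; eexists; eauto.
  intros [[a H1] [b H2]]. exists (pair a b). apply ev_pair; auto.
Qed.

Lemma PR_dom f g a (P : nat -> Prop) :
  (forall i r, dom g (pair (pair a i) r) <-> P i) ->
  forall n, (exists y, PR f g a n y) <-> dom f a /\ forall i, i < n -> P i.
Proof.
  intros HP n. induction n.
  - split. intros [y H]. inversion H; subst. split. exists y; auto. intros; lia.
    intros [[y H] _]. exists y. constructor; auto.
  - split.
    + intros [y H]. inversion H; subst.
      assert (exists y, PR f g a n y) as Hn by eauto. apply IHn in Hn as [Hf Hi].
      split; auto. intros i Hi'. destruct (Nat.eq_dec i n). subst. apply (HP n r). exists y; auto.
      apply Hi; lia.
    + intros [Hf Hi]. destruct (proj2 IHn (conj Hf (fun i (H : i < n) => Hi i (Nat.lt_lt_succ_r _ _ H)))) as [r Hr].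
      destruct (proj2 (HP n r) (Hi n ltac:(lia))) as [y Hy]. exists y. econstructor; eauto.
Qed.

Lemma dom_prim f g a n (P : nat -> Prop) :
  (forall i r, dom g (pair (pair a i) r) <-> P i) ->
  (dom (CPrim f g) (pair a n) <-> dom f a /\ forall i, i < n -> P i).
Proof.
  intros HP. rewrite <- (PR_dom f g a P HP n). unfold dom. split; intros [y H]; exists y; apply ev_prim; auto.
Qed.

Definition GUARD (d : code) : code := CPrim CZero (CComp d (CComp CFst CFst)).
Lemma dom_guard0 d a : dom (GUARD d) (pair a 0).
Proof. exists 0. apply ev_prim. constructor. apply ev_zero. Qed.
Lemma dom_guard1 d a : dom (GUARD d) (pair a 1) <-> dom d a.
Proof.
  unfold GUARD.
  assert (HP : forall i r, dom (CComp d (CComp CFst CFst)) (pair (pair a i) r) <-> (fun _ => dom d a) i).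
  { intros i r. rewrite (dom_comp_fun _ _ (fun z => fst (unpair (fst (unpair z))))).
    rewrite !fst_unpair_pair. tauto.
    intros z. eapply ev_comp. apply ev_fst. apply ev_fst. }
  rewrite (dom_prim _ _ a 1 (fun _ => dom d a) HP). split. intros [_ H]. apply (H 0); lia. intros H. split. exists 0; apply ev_zero. auto.
Qed.

Definition ITEM : code := CComp NTH (CPair (CComp CSnd CFst) (CComp CSnd (CComp CFst CFst))).
Definition STEPC (c : code) : code := CComp (GUARD (CComp c PRED)) (CPair ITEM (CComp NZ ITEM)).
Definition CHECK (c : code) : code := CComp (CPrim (CComp c CFst) (STEPC c)) (CPair CId CSnd).
Definition NOTMEM : code := CComp ISZ (CComp COUNT (CPair (CComp CSucc CFst) CSnd)).
Definition BODY (c : code) : code := CComp (GUARD (CHECK c)) (CPair CId NOTMEM).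
Definition WC (c k : code) : code := CComp (BODY c) (CPair CId k).

Definition TGUARD (t : tcode) : tcode := TPrim TZero (TComp t (lift (CComp CFst CFst))).
Definition STEPCT : tcode := TComp (TGUARD (TComp H1 (lift PRED))) (lift (CPair ITEM (CComp NZ ITEM))).
Definition CHECKT : tcode := TComp (TPrim (TComp H1 TFst) STEPCT) (lift (CPair CId CSnd)).
Definition BODYT : tcode := TComp (TGUARD CHECKT) (TPair TId (lift NOTMEM)).
Definition WT : tcode := TComp BODYT (TPair TId H2).

Lemma inst_WT c k : inst WT c k = WC c k.
Proof. reflexivity. Qed.

Lemma ev_item x l i r : ev ITEM (pair (pair (pair x l) i) r) (lnth i l).
Proof. unfold ITEM. evs. apply ev_nth. Qed.

Lemma dom_stepc c x l i r :
  dom (STEPC c) (pair (pair (pair x l) i) r) <-> (lnth i l <> 0 -> dom c (pred (lnth i l))).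
Proof.
  unfold STEPC. rewrite dom_comp. split.
  - intros (a & H1 & H2). apply ev_pair_inv in H1 as (e & b & He & Hb & ->).
    pose proof (ev_det _ _ _ _ He (ev_item x l i r)) as ->.
    apply ev_comp_inv in Hb as (e' & He' & Hb).
    pose proof (ev_det _ _ _ _ He' (ev_item x l i r)) as ->.
    pose proof (ev_det _ _ _ _ Hb (ev_nz _)) as ->.
    intros Hne. destruct (lnth i l) as [|e0] eqn:E. congruence.
    change (isz (isz (S e0))) with 1 in H2. apply (proj1 (dom_guard1 _ _)) in H2. pose proof (dom_comp_fun c PRED pred (S e0) ev_pred). tauto.
  - intros H. exists (pair (lnth i l) (isz (isz (lnth i l)))). split.
    evs. apply ev_item. apply ev_item. apply ev_nz.
    destruct (lnth i l) as [|e0] eqn:E. apply dom_guard0.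
    change (isz (isz (S e0))) with 1. apply dom_guard1. rewrite (dom_comp_fun _ _ pred) by apply ev_pred. apply H. lia.
Qed.

Lemma dom_check c x l : dom (CHECK c) (pair x l) <->
  dom c x /\ forall i, i < l -> lnth i l <> 0 -> dom c (pred (lnth i l)).
Proof.
  unfold CHECK. rewrite (dom_comp_fun _ _ (fun z => pair z (snd (unpair z)))).
  2:{ intros z. evs. }
  rewrite snd_unpair_pair.
  rewrite (dom_prim _ _ _ _ (fun i => lnth i l <> 0 -> dom c (pred (lnth i l)))).
  2:{ intros i r. apply dom_stepc. }
  rewrite (dom_comp_fun _ _ (fun z => fst (unpair z))) by (intros; apply ev_fst).
  rewrite fst_unpair_pair. tauto.
Qed.

Lemma dom_body c x l : dom (BODY c) (pair x l) <->
  0 < cntr (S x) l l \/ dom (CHECK c) (pair x l).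
Proof.
  unfold BODY. rewrite (dom_comp_fun _ _ (fun z => pair z (isz (cntr (S (fst (unpair z))) (snd (unpair z)) (snd (unpair z)))))).
  2:{ intros z. unfold NOTMEM. evs. apply ev_count. apply ev_isz. }
  rewrite fst_unpair_pair, snd_unpair_pair.
  destruct (cntr (S x) l l) eqn:E; simpl.
  - rewrite dom_guard1. split; auto. intros [H|H]; auto. lia.
  - split; intros; auto. left; lia. apply dom_guard0.
Qed.

Lemma dom_wc c l x : dom (WC c (konst l)) x <-> dom (BODY c) (pair x l).
Proof.
  unfold WC. rewrite (dom_comp_fun _ _ (fun z => pair z l)). tauto.
  intros z. evs.
Qed.

Lemma dom_wc_list c s x : dom (WC c (konst (enc_list s))) x <->
  In (S x) s \/ (dom c x /\ forall y, In (S y) s -> dom c y).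
Proof.
  rewrite dom_wc, dom_body, dom_check, cnt_in by lia.
  apply or_iff_compat_l. apply and_iff_compat_l. split.
  - intros H y Hy. destruct (In_nth s (S y) 0 Hy) as (i & Hi & Hn).
    specialize (H i). rewrite lnth_enc, Hn in H. apply H. pose proof (len_le_enc s). lia. lia.
  - intros H i Hi. rewrite lnth_enc. intros Hn.
    destruct (Nat.lt_ge_cases i (length s)).
    + apply H. destruct (nth i s 0) eqn:E. congruence. simpl. rewrite <- E. apply nth_In; auto.
    + rewrite nth_overflow in Hn; auto. congruence.
Qed.

Definition SB (b : interaction) : code :=
  match b with G => SG | Sd => CId | Psd => CPair CFst (CComp POPC CFst) end.
Definition LB (b : interaction) : code :=
  match b with G => CId | Sd => BITS | Psd => CComp BITS CFst end.

Definition LC (b : interaction) (h cf cg : nat) : code :=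
  CComp (decode cg) (CComp (mkT WT)
    (CPair (CComp (decode cf) (CComp (decode h) (SB b))) (CComp KN (LB b)))).

Lemma ev_LC b h cf cg (f g : nat -> nat) x sv lv e :
  (forall z, psi cf z (f z)) -> (forall z, psi cg z (g z)) ->
  ev (SB b) x sv -> ev (LB b) x lv -> psi h sv e ->
  ev (LC b h cf cg) x (g (numT WT (f e) (kn lv))).
Proof.
  intros Hf Hg Hs Hl He. unfold LC.
  eapply ev_comp. eapply ev_comp. eapply ev_pair.
  eapply ev_comp. eapply ev_comp. apply Hs. apply He. apply Hf.
  eapply ev_comp. apply Hl. apply ev_kn.
  apply ev_mkT. apply Hg.
Qed.

Lemma W_hyp (phi : nat -> nat -> nat -> Prop) (f g : nat -> nat) e s z :
  (forall e x y, phi e x y <-> psi (f e) x y) ->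
  (forall e x y, psi e x y <-> phi (g e) x y) ->
  (W phi (g (numT WT (f e) (kn (enc_list s)))) z <->
   In (S z) s \/ (W phi e z /\ forall y, In (S y) s -> W phi e y)).
Proof.
  intros Hf Hg.
  assert (HW : forall u, W phi u z <-> dom (decode (f u)) z).
  { intros u. unfold W, dom, ev. split; intros [y Hy]; exists y. apply Hf in Hy. exact Hy. apply Hf. exact Hy. }
  assert (HWa : forall u, W phi u z <-> dom (decode (f u)) z) by auto.
  unfold W at 1. 
  transitivity (dom (WC (decode (f e)) (konst (enc_list s))) z).
  - rewrite <- inst_WT, <- kn_ok, <- numT_ok. unfold dom, ev.
    split; intros [y Hy]; exists y. apply Hg in Hy. exact Hy. apply Hg. exact Hy.
  - rewrite dom_wc_list. unfold W. 
    assert (Hd : forall u, dom (decode (f e)) u <-> exists y, phi e u y).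
    { intros u. unfold dom, ev. split; intros [y Hy]; exists y. apply Hf. exact Hy. apply Hf in Hy. exact Hy. }
    rewrite Hd. split; intros [H|[H1 H2]]; auto; right; split; auto; intros y Hy; apply Hd; auto.
Qed.

Lemma cp_mono T k k' z : k <= k' -> content_prefix T k z -> content_prefix T k' z.
Proof. intros H (i & Hi & E). exists i; split; auto; lia. Qed.

Lemma cp_content T k z : content_prefix T k z -> content T z.
Proof. intros (i & _ & E). exists i; auto. Qed.

Lemma bounded_stab (f : nat -> nat) B : (forall k k', k <= k' -> f k <= f k') -> (forall k, f k < B) ->
  exists k0, forall k, k0 <= k -> f k = f k0.
Proof.
  intros Hm Hb.
  assert (forall d k, B - f k <= d -> exists k0, forall k', k0 <= k' -> f k' = f k0) as H.
  { induction d; intros k Hk.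
    - specialize (Hb k). lia.
    - destruct (classic (forall k', k <= k' -> f k' = f k)) as [H|H]. exists k; auto.
      apply not_all_ex_not in H as [j Hj]. apply imply_to_and in Hj as [Hj1 Hj2].
      apply (IHd j). pose proof (Hm _ _ Hj1). lia. }
  apply (H B 0). lia.
Qed.

Lemma main_abs phi T Sx (a : nat -> nat) (r q : nat -> nat) :
  (forall z, content Sx z <-> content T z) ->
  (forall k, set_eq (content_prefix Sx (a k)) (content_prefix T k)) ->
  (forall k k', k <= k' -> a k <= a k') ->
  (forall k k', set_eq (content_prefix T k) (content_prefix T k') -> a k = a k') ->
  (forall k z, W phi (q k) z <-> content_prefix T k z \/
      (W phi (r (a k)) z /\ forall y, content_prefix T k y -> W phi (r (a k)) y)) ->
  SemConv phi r Sx ->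
  SemWb phi q T /\ (Bc phi r Sx -> Bc phi q T).
Proof.
  intros Hc Ha Hmono Hconst HV Hconv. split.
  - intros n m (k & Hnk & Hkm & Hne).
    apply NNPP. intros Hno. apply Hne. clear Hne.
    assert (Hsub : forall x, content_prefix T m x -> W phi (q n) x).
    { intros x Hx. apply NNPP. intros Hx'. apply Hno. exists x. repeat split; auto.
      apply HV. left; auto. }
    destruct (classic (set_eq (content_prefix T n) (content_prefix T k))) as [Heq|Hneq].
    + pose proof (Hconst _ _ Heq) as Eа. intros z. rewrite !HV, Eа.
      split; intros [H|[H1 H2]]; try (left; apply Heq; auto; fail); try (left; apply Heq; auto; fail);
        right; split; auto; intros y Hy; apply H2; apply Heq; auto.
    + assert (exists y, content_prefix T k y /\ ~ content_prefix T n y) as (y & Hy1 & Hy2).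
      { apply NNPP. intros Hn. apply Hneq. intros z. split. apply cp_mono; auto.
        intros Hz. apply NNPP. intros Hz'. apply Hn. exists z; auto. }
      assert (Hqy : W phi (q n) y) by (apply Hsub; eapply cp_mono; [|eauto]; lia).
      apply HV in Hqy as [Hqy|[_ Hcons]]. contradiction.
      set (Cn := W phi (r (a n))) in *.
      assert (HqC : set_eq (W phi (q n)) Cn).
      { intros z. pose proof (HV n z) as Hz. fold Cn in Hz. split. intros H. apply Hz in H as [H|[H _]]; auto.
        intros H. apply Hz. right; auto. }
      assert (Han : a n <> a k).
      { intros E. apply Hneq. intros z. rewrite <- (Ha n z), <- (Ha k z), E. tauto. }
      pose proof (Hmono _ _ Hnk).
      assert (HCk : set_eq Cn (W phi (r (a k)))).
      { apply Hconv. lia. intros x Hx. apply Ha in Hx. apply HqC. apply Hsub. eapply cp_mono; [|eauto]; lia. }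
      intros z. rewrite (HqC z). rewrite (HV k z). split.
      * intros Hz. right. split. apply HCk; auto. intros y' Hy'. apply HCk. apply HqC. apply Hsub.
        eapply cp_mono; [|eauto]; lia.
      * intros [Hz|[Hz _]]. apply HqC. apply Hsub. eapply cp_mono; [|eauto]; lia. apply HCk; auto.
  - intros [i0 Hi0].
    assert (HA : forall k, set_eq (content_prefix T k) (content T) -> set_eq (W phi (q k)) (content T)).
    { intros k Hk z. rewrite HV. split.
      - intros [H|[H1 H2]]. apply Hk; auto.
        set (m' := max i0 (S (a k))).
        assert (set_eq (W phi (r (a k))) (W phi (r m'))).
        { apply Hconv. lia. intros x Hx. apply H2. apply Hk. apply Hc. eapply cp_content; eauto. }
        apply H in H1. apply Hi0 in H1; [|lia]. apply Hc; auto.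
      - intros H. left. apply Hk; auto. }
    assert (HB : forall k, i0 <= a k -> set_eq (W phi (q k)) (content T)).
    { intros k Hk z. rewrite HV. specialize (Hi0 (a k) Hk). split.
      - intros [H|[H1 H2]]. eapply cp_content; eauto. apply Hc, Hi0; auto.
      - intros H. right. split. apply Hi0, Hc; auto. intros y Hy. apply Hi0, Hc. eapply cp_content; eauto. }
    destruct (classic (exists k, i0 <= a k)) as [[k1 Hk1]|Hno].
    + exists k1. intros k Hk. apply HB. pose proof (Hmono _ _ Hk). lia.
    + assert (forall k, a k < i0) as Hlt.
      { intros k. destruct (Nat.lt_ge_cases (a k) i0); auto. exfalso; apply Hno; eauto. }
      destruct (bounded_stab a i0 Hmono Hlt) as [k0 Hk0].
      assert (HD : forall k, k0 <= k -> set_eq (content_prefix T k) (content_prefix T k0)).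
      { intros k Hk z. rewrite <- (Ha k z), <- (Ha k0 z), (Hk0 k Hk). tauto. }
      exists k0. intros k Hk. apply HA. intros z. split. apply cp_content.
      intros [j Hj]. apply (HD k Hk). apply (HD (max k (S j))). lia. exists j. split; [lia|auto].
Qed.

Lemma pow_add_bit x : forall r y, Nat.testbit r x = false ->
  Nat.testbit (2 ^ x + r) y = (y =? x) || Nat.testbit r y.
Proof.
  induction x; intros r y Hr.
  - pose proof (Nat.div2_odd r) as E. rewrite <- Nat.bit0_odd, Hr in E. change (Nat.b2n false) with 0 in E.
    rewrite E. replace (2 ^ 0 + (2 * Nat.div2 r + 0)) with (2 * Nat.div2 r + 1) by (rewrite Nat.pow_0_r; lia).
    destruct y. rewrite Nat.testbit_odd_0. reflexivity.
    rewrite Nat.testbit_odd_succ', Nat.add_0_r, Nat.double_bits_succ. reflexivity.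
  - pose proof (Nat.div2_odd r) as E. rewrite <- Nat.bit0_odd in E.
    rewrite E at 1. replace (2 ^ S x + (2 * Nat.div2 r + Nat.b2n (Nat.testbit r 0)))
      with (2 * (2 ^ x + Nat.div2 r) + Nat.b2n (Nat.testbit r 0)) by (rewrite Nat.pow_succ_r'; lia).
    destruct y.
    + rewrite Nat.testbit_0_r. reflexivity.
    + rewrite Nat.testbit_succ_r. rewrite IHx. rewrite <- Nat.testbit_div2. reflexivity.
      rewrite Nat.testbit_div2, Hr. reflexivity.
Qed.

Definition sumpow (u : list nat) : nat := fold_right (fun x acc => 2 ^ x + acc) 0 u.

Lemma sumpow_bit u y : NoDup u -> (Nat.testbit (sumpow u) y = true <-> In y u).
Proof.
  revert y; induction u; intros y Hn; simpl. rewrite Nat.bits_0. split; [discriminate|tauto].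
  inversion Hn as [|? ? Hna Hnu]; subst. rewrite pow_add_bit.
  rewrite orb_true_iff, IHu, Nat.eqb_eq by auto. split; intros [H|H]; auto.
  destruct (Nat.testbit (sumpow u) a) eqn:E; auto. apply (IHu a Hnu) in E. contradiction.
Qed.

Lemma undup_spec s : NoDup (undup_nat s) /\ forall x, In x (undup_nat s) <-> In x s.
Proof.
  induction s as [|a s [IH1 IH2]]; simpl. split. constructor. tauto.
  destruct (existsb (Nat.eqb a) s) eqn:E.
  - split; auto. intros x. rewrite IH2. split; auto. intros [<-|H]; auto.
    apply existsb_exists in E as (y & Hy & Ey). apply Nat.eqb_eq in Ey; subst; auto.
  - split. constructor; auto. rewrite IH2. intros H. assert (existsb (Nat.eqb a) s = true).
    apply existsb_exists. exists a. split; auto. apply Nat.eqb_refl. congruence.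
    intros x. simpl. rewrite IH2. tauto.
Qed.

Lemma enc_set_bit s y : Nat.testbit (enc_set s) y = true <-> In y s.
Proof.
  destruct (undup_spec s) as [H1 H2]. unfold enc_set. fold (sumpow (undup_nat s)).
  rewrite sumpow_bit by auto. apply H2.
Qed.

Lemma enc_set_ext s s' : (forall y, In y s <-> In y s') -> enc_set s = enc_set s'.
Proof.
  intros H. apply Nat.bits_inj. intros y.
  destruct (Nat.testbit (enc_set s) y) eqn:E1; destruct (Nat.testbit (enc_set s') y) eqn:E2; auto.
  apply enc_set_bit in E1. apply H in E1. apply enc_set_bit in E1. congruence.
  apply enc_set_bit in E2. apply H in E2. apply enc_set_bit in E2. congruence.
Qed.

Lemma content_list_in T i y : In y (content_list T i) <-> content_prefix T i y.
Proof.
  unfold content_list, prefix, content_prefix. rewrite in_flat_map. split.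
  - intros (o & Ho & Hy). apply in_map_iff in Ho as (j & <- & Hj). apply in_seq in Hj.
    destruct (T j) eqn:E; simpl in Hy; [destruct Hy as [<-|[]]|contradiction]. exists j; split; auto; lia.
  - intros (j & Hj & E). exists (Some y). split. apply in_map_iff. exists j. split; auto. apply in_seq; lia.
    simpl; auto.
Qed.

Definition sigl (T : text) (k : nat) : list nat := map enc_item (prefix T k).
Definition ul (T : text) (k : nat) : list nat := fold_left newf (sigl T k) [].
Definition NL (T : text) (k : nat) : list nat := rev (ul T k).
Definition aa (T : text) (k : nat) : nat := length (ul T k).

Lemma sig_S T k : sigl T (S k) = sigl T k ++ [enc_item (T k)].
Proof. unfold sigl, prefix. rewrite seq_S, map_app, map_app. reflexivity. Qed.

Lemma ul_S T k : ul T (S k) = newf (ul T k) (enc_item (T k)).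
Proof. unfold ul. rewrite sig_S, fold_left_app. reflexivity. Qed.

Lemma cp_S T k z : content_prefix T (S k) z <-> content_prefix T k z \/ T k = Some z.
Proof.
  unfold content_prefix. split.
  - intros (i & Hi & E). destruct (Nat.eq_dec i k). subst; auto. left; exists i; split; auto; lia.
  - intros [(i & Hi & E)|E]. exists i; split; auto. exists k; auto.
Qed.

Lemma sig_in T k z : In (S z) (sigl T k) <-> content_prefix T k z.
Proof.
  induction k. simpl. split. tauto. intros (i & H & _); lia.
  rewrite sig_S, in_app_iff, IHk, cp_S. simpl. destruct (T k); simpl; split; intros [H|H]; auto;
  try (destruct H as [H|[]]); try (injection H as ->); auto; try discriminate; try (right; left; congruence).
Qed.

Lemma ul_in T k e : In e (ul T k) <-> exists z, e = S z /\ content_prefix T k z.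
Proof.
  revert e; induction k; intros e.
  - simpl. split. tauto. intros (z & _ & i & H & _); lia.
  - rewrite ul_S. unfold newf.
    destruct (enc_item (T k) =? 0) eqn:E0; simpl.
    + rewrite IHk. apply Nat.eqb_eq in E0. destruct (T k) eqn:Ek; [discriminate|].
      split; intros (z & -> & Hz); exists z; split; auto. apply cp_S; auto.
      apply cp_S in Hz as [Hz|Hz]; auto. congruence.
    + destruct (existsb (Nat.eqb (enc_item (T k))) (ul T k)) eqn:E; simpl.
      * rewrite IHk. apply existsb_in in E. apply IHk in E as (z0 & Ez & Hz0).
        split; intros (z & -> & Hz); exists z; split; auto. apply cp_S; auto.
        apply cp_S in Hz as [Hz|Hz]; auto. rewrite Hz in Ez. simpl in Ez. injection Ez as ->. auto.
      * rewrite IHk. destruct (T k) eqn:Ek; [|discriminate]. simpl.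
        split. intros [<-|(z & -> & Hz)]. exists n; split; auto. apply cp_S; auto.
        exists z; split; auto. apply cp_S; auto.
        intros (z & -> & Hz). apply cp_S in Hz as [Hz|Hz]. right; eauto. left; congruence.
Qed.

Lemma ul_nz T k : ~ In 0 (ul T k).
Proof. rewrite ul_in. intros (z & E & _); discriminate. Qed.

Lemma ul_nodup T k : NoDup (ul T k).
Proof.
  induction k. constructor. rewrite ul_S. unfold newf.
  destruct (negb (enc_item (T k) =? 0) && negb (existsb (Nat.eqb (enc_item (T k))) (ul T k))) eqn:E; auto.
  constructor; auto. apply andb_true_iff in E as [_ E]. intros H. apply existsb_in in H. rewrite H in E. discriminate.
Qed.

Lemma ul_ext T k k' : k <= k' -> exists t, ul T k' = t ++ ul T k.
Proof.
  intros H. induction H. exists []; auto.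
  destruct IHle as [t Ht]. rewrite ul_S. unfold newf. destruct (_ && _).
  exists (enc_item (T m) :: t). rewrite Ht; auto. exists t; auto.
Qed.

Lemma aa_mono T k k' : k <= k' -> aa T k <= aa T k'.
Proof. intros H. destruct (ul_ext T k k' H) as [t Ht]. unfold aa. rewrite Ht, length_app. lia. Qed.

Lemma NL_ext T k k' : k <= k' -> exists t, NL T k' = NL T k ++ t.
Proof. intros H. destruct (ul_ext T k k' H) as [t Ht]. exists (rev t). unfold NL. rewrite Ht, rev_app_distr. auto. Qed.

Lemma ul_const T k k' : k <= k' -> set_eq (content_prefix T k) (content_prefix T k') -> ul T k' = ul T k.
Proof.
  intros H Heq. induction H. auto.
  assert (Hm : set_eq (content_prefix T k) (content_prefix T m)).
  { intros z. split. intros Hz. eapply cp_mono; [|eauto]; lia.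
    intros Hz. apply Heq. eapply cp_mono; [|eauto]; lia. }
  rewrite ul_S, IHle by auto. unfold newf.
  destruct (T m) as [z|] eqn:E; [|reflexivity]. cbn [enc_item].
  assert (In (S z) (ul T k)). { apply ul_in. exists z. split; auto. apply Heq. apply cp_S; auto. }
  rewrite (proj2 (existsb_in _ _) H0). reflexivity.
Qed.

Lemma aa_const T k k' : set_eq (content_prefix T k) (content_prefix T k') -> aa T k = aa T k'.
Proof.
  intros H. destruct (Nat.le_ge_cases k k').
  - unfold aa. rewrite (ul_const T k k'); auto.
  - unfold aa. rewrite (ul_const T k' k); auto. intros z; split; apply H.
Qed.

Lemma NL_len T k : length (NL T k) = aa T k.
Proof. unfold NL, aa. apply length_rev. Qed.

Lemma NL_indep T i k k' : i < aa T k -> i < aa T k' -> nth i (NL T k) 0 = nth i (NL T k') 0.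
Proof.
  intros H1 H2. destruct (Nat.le_ge_cases k k') as [H|H].
  - destruct (NL_ext T k k' H) as [t ->]. rewrite app_nth1; auto. rewrite NL_len; auto.
  - destruct (NL_ext T k' k H) as [t ->]. rewrite app_nth1; auto. rewrite NL_len; auto.
Qed.

Definition Sx (T : text) (i : nat) : option nat :=
  match excluded_middle_informative (exists k, i < aa T k) with
  | left H => Some (pred (nth i (NL T (proj1_sig (constructive_indefinite_description _ H))) 0))
  | right _ => None
  end.

Lemma Sx_spec T i k : i < aa T k -> Sx T i = Some (pred (nth i (NL T k) 0)).
Proof.
  intros H. unfold Sx. destruct (excluded_middle_informative _) as [H'|H'].
  - destruct (constructive_indefinite_description _ H') as [k' Hk']. simpl.
    rewrite (NL_indep T i k' k); auto.
  - exfalso. apply H'. eauto.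
Qed.

Lemma Sx_none T i : (forall k, aa T k <= i) -> Sx T i = None.
Proof.
  intros H. unfold Sx. destruct (excluded_middle_informative _) as [[k Hk]|H']; auto.
  specialize (H k). lia.
Qed.

Lemma NL_nz T k i : i < aa T k -> nth i (NL T k) 0 = S (pred (nth i (NL T k) 0)).
Proof.
  intros H. rewrite <- NL_len in H. apply (nth_In _ 0) in H.
  destruct (nth i (NL T k) 0). exfalso; apply (ul_nz T k). apply in_rev. exact H. reflexivity.
Qed.

Lemma Sx_cp T k z : content_prefix (Sx T) (aa T k) z <-> content_prefix T k z.
Proof.
  split.
  - intros (i & Hi & E). rewrite (Sx_spec T i k Hi) in E. injection E as E.
    pose proof (NL_nz T k i Hi). rewrite E in H.
    assert (In (S z) (ul T k)) as H0.
    { rewrite <- H. apply in_rev. change (In (nth i (NL T k) 0) (NL T k)). apply nth_In. rewrite NL_len; auto. }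
    apply ul_in in H0 as (z' & E' & Hz'). injection E' as ->. auto.
  - intros H. assert (In (S z) (NL T k)) as Hin. { apply in_rev. unfold NL. rewrite rev_involutive. apply ul_in; eauto. }
    destruct (In_nth _ _ 0 Hin) as (i & Hi & Hn). rewrite NL_len in Hi. exists i. split; auto.
    rewrite (Sx_spec T i k Hi), Hn. reflexivity.
Qed.

Lemma Sx_content T z : content (Sx T) z <-> content T z.
Proof.
  split.
  - intros [i E]. destruct (classic (exists k, i < aa T k)) as [[k Hk]|Hn].
    + apply (cp_content T k). apply Sx_cp. exists i; auto.
    + rewrite Sx_none in E. discriminate. intros k. destruct (Nat.lt_ge_cases i (aa T k)); auto.
      exfalso; eauto.
  - intros [j E]. apply (cp_content _ (aa T (S j))). apply Sx_cp. apply cp_S; auto.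
Qed.

Lemma Sx_prefix T k : map enc_item (prefix (Sx T) (aa T k)) = NL T k.
Proof.
  apply nth_ext with (d := 0) (d' := 0).
  - rewrite NL_len. unfold prefix. rewrite !length_map, length_seq. auto.
  - intros i Hi. unfold prefix in *. rewrite !length_map, length_seq in Hi.
    rewrite (nth_indep _ 0 (enc_item None)) by (rewrite !length_map, length_seq; auto).
    rewrite map_nth. rewrite (nth_indep _ None (Sx T 0)) by (rewrite length_map, length_seq; auto).
    rewrite map_nth, seq_nth by auto. simpl.
    rewrite (Sx_spec T i k Hi). simpl. symmetry. apply NL_nz; auto.
Qed.

Lemma fold_revf l acc : ~ In 0 l -> fold_left revf l acc = rev l ++ acc.
Proof.
  revert acc; induction l; intros acc H; simpl; auto.
  rewrite IHl. unfold revf. destruct a. exfalso; apply H; left; auto. simpl. rewrite <- app_assoc. auto.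
  intros H'; apply H; right; auto.
Qed.

Lemma sgl_sig T k : sgl (sigl T k) = NL T k.
Proof. unfold sgl. fold (ul T k). rewrite fold_revf. apply app_nil_r. apply ul_nz. Qed.

Lemma enc_set_Sx T k : enc_set (content_list (Sx T) (aa T k)) = enc_set (content_list T k).
Proof. apply enc_set_ext. intros y. rewrite !content_list_in. apply Sx_cp. Qed.

Lemma bl_len d n : length (bl d n) = popr d n.
Proof. induction n; simpl; auto. destruct (Nat.testbit d n); simpl; lia. Qed.

Lemma bl_nodup d n : NoDup (bl d n).
Proof.
  induction n; simpl. constructor. destruct (Nat.testbit d n) eqn:E; auto. constructor; auto.
  rewrite bl_in. intros (y & Hy & H & _). lia.
Qed.

Lemma bl_cp T k z : In (S z) (bl (enc_set (content_list T k)) (enc_set (content_list T k))) <-> content_prefix T k z.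
Proof. rewrite bits_in, enc_set_bit, content_list_in. tauto. Qed.

Lemma popr_aa T k : let d := enc_set (content_list T k) in popr d d = aa T k.
Proof.
  intros d. rewrite <- bl_len. unfold aa.
  assert (forall e, In e (bl d d) <-> In e (ul T k)).
  { intros e. destruct e. split; intros H. exfalso; apply (bits_nz d); auto. exfalso; apply (ul_nz T k); auto.
    unfold d. rewrite bl_cp, ul_in. split. eauto. intros (z & E & H). injection E as ->; auto. }
  apply Nat.le_antisymm; apply NoDup_incl_length; try apply bl_nodup; try apply ul_nodup; intros e; apply H.
Qed.

Lemma semwb_conv phi p T : SemWb phi p T -> SemConv phi p T.
Proof.
  intros H n m Hnm Hsub. apply NNPP. intros Hne.
  destruct (H n m) as (x & Hx1 & Hx2 & Hx3). exists m. repeat split; auto; lia.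
  apply Hx3, Hsub; auto.
Qed.

Lemma run_det b h T i y y' : run b h T i y -> run b h T i y' -> y = y'.
Proof. destruct b; apply psi_det. Qed.

Definition lvl (b : interaction) (T : text) (k : nat) : list nat :=
  match b with
  | G => sigl T k
  | _ => bl (enc_set (content_list T k)) (enc_set (content_list T k))
  end.

Lemma lvl_in b T k z : In (S z) (lvl b T k) <-> content_prefix T k z.
Proof. destruct b; simpl. apply sig_in. apply bl_cp. apply bl_cp. Qed.

Theorem theorem14 (phi : nat -> nat -> nat -> Prop) (Hphi : acceptable phi)
  (b : interaction) (C : (nat -> Prop) -> Prop) :
  learnable phi (SemWb phi) b C <-> learnable phi (SemConv phi) b C.
Proof.
  split.
  - intros [h [H1 H2]]. exists h. split; auto.
    intros T. destruct (H1 T) as [p [Hp Hw]]. exists p. split; auto. apply semwb_conv; auto.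
  - intros [h [H1 H2]].
    destruct Hphi as (f & g & [cf Hcf] & [cg Hcg] & Hf & Hg).
    exists (enc (LC b h cf cg)).
    assert (key : forall T, exists q, (forall i, run b (enc (LC b h cf cg)) T i (q i)) /\ SemWb phi q T /\
               (forall L, C L -> set_eq (content T) L -> Bc phi q T)).
    { intros T. destruct (H1 (Sx T)) as [r [Hr Hconv]].
      set (q := fun k => g (numT WT (f (r (aa T k))) (kn (enc_list (lvl b T k))))).
      assert (Hrun : forall k, run b (enc (LC b h cf cg)) T k (q k)).
      { intros k. specialize (Hr (aa T k)). unfold q.
        destruct b; unfold run in *; apply psi_enc.
        - apply (ev_LC _ _ _ _ f g _ (enc_list (sgl (sigl T k))) (enc_list (sigl T k))); auto.
          apply ev_sg. apply ev_id.
          rewrite sgl_sig, <- Sx_prefix. exact Hr.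
        - set (d := enc_set (content_list T k)).
          apply (ev_LC _ _ _ _ f g _ (pair d (popr d d)) (enc_list (bl d d))); auto.
          apply ev_pair. apply ev_fst'. eapply ev_comp. apply ev_fst'. apply ev_popc.
          eapply ev_comp. apply ev_fst'. apply ev_bits.
          unfold d. rewrite popr_aa, <- enc_set_Sx. exact Hr.
        - set (d := enc_set (content_list T k)).
          apply (ev_LC _ _ _ _ f g _ d (enc_list (bl d d))); auto.
          apply ev_id. apply ev_bits.
          unfold d. rewrite <- enc_set_Sx. exact Hr. }
      assert (HV : forall k z, W phi (q k) z <-> content_prefix T k z \/
          (W phi (r (aa T k)) z /\ forall y, content_prefix T k y -> W phi (r (aa T k)) y)).
      { intros k z. unfold q. rewrite W_hyp by auto. rewrite !lvl_in.
        split; intros [H|[Ha Hb]]; auto; right; split; auto; intros y Hy; apply Hb;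
          first [apply (proj1 (lvl_in b T k y)) | apply (proj2 (lvl_in b T k y))]; auto. }
      destruct (main_abs phi T (Sx T) (aa T) r q (Sx_content T) (Sx_cp T) (aa_mono T) (aa_const T) HV Hconv)
        as [Hwb Hbc].
      exists q. split; auto. split; auto.
      intros L HL HT. apply Hbc.
      destruct (H2 L HL (Sx T)) as [p [Hp Hb]].
      { intros z. rewrite Sx_content. apply HT. }
      destruct Hb as [n0 Hn0]. exists n0. intros n Hn.
      rewrite <- (run_det _ _ _ _ _ _ (Hp n) (Hr n)). apply Hn0; auto. }
    split.
    + intros T. destruct (key T) as (q & Hq & Hw & _). eauto.
    + intros L HL T HT. destruct (key T) as (q & Hq & _ & Hb). eauto.
Qed.
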